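(* Let $p,q$ be distinct sentential variables and let $\pi$ be any weighting function. For each of the following items, there exist a $\pi$-based selection function $\sigma$ and a $\Delta$ model $M$ with selection function $\sigma$ witnessing failure, namely: for items given as ''$\varphi$ does not imply $\psi$'', some world lies in $[\![\varphi]\!]_M\setminus[\![\psi]\!]_M$; for the item given as ''$\psi$ is not valid'', some world lies outside $[\![\psi]\!]_M$. (a) $\mathbb{P}p\wedge\mathbb{P}q$ does not imply $\mathbb{P}(p\wedge q)$; (b) $\mathbb{O}(p\vee q)$ does not imply $\mathbb{O}p\vee\mathbb{O}q$; (c) $p\rightarrow q$ does not imply $\mathbb{O}p\rightarrow\mathbb{O}q$; (d) $\mathbb{O}p$ does not imply $\mathbb{O}(p\wedge q)$; (e) $\mathbb{P}p$ does not imply $\mathbb{P}(p\wedge q)$; (f) $\mathbb{C}(p,q)\vee\mathbb{C}(q,p)$ is not valid; (g) $\mathbb{O}(p\vee q)$ does not imply $\mathbb{O}p$; (h) $\mathbb{O}p$ does not imply $p$; (i) $\mathbb{P}p$ does not imply $\mathbb{P}\mathbb{O}p$; (j) $(\neg q\succ\neg p)\wedge\mathbb{O}p$ does not imply $\mathbb{O}q$.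
   Context: Fix a set $\mathrm{PROPS}$ of sentential variables (containing $p,q$). The language $\mathcal{L}$: every $v\in\mathrm{PROPS}$ is a formula; if $\varphi,\psi$ are formulas so are $\neg\varphi$, $(\varphi\wedge\psi)$, $(\varphi\succeq\psi)$. Abbreviations: $\vee,\rightarrow,\leftrightarrow$ as usual; $\varphi\succ\psi := (\varphi\succeq\psi)\wedge\neg(\psi\succeq\varphi)$; $\top := (v_0\rightarrow v_0)$ for a fixed variable $v_0$. Deontic operators: $\mathbb{C}(\varphi,\psi) := (\varphi\wedge\psi)\succ(\varphi\wedge\neg\psi)$; $\mathbb{O}\psi := \mathbb{C}(\top,\psi)$; $\mathbb{P}\psi:=\neg\mathbb{O}\neg\psi$. A model is $M=(W,\sigma,u,t)$ with $W$ a nonempty set, $\sigma:W\times\{A\subseteq W:A\ne\emptyset\}\to W$ with $\sigma(w,A)\in A$, $u:W\to\mathbb{R}$, and $t:\mathrm{PROPS}\to\mathcal{P}(W)$. Semantics: $[\![v]\!]_M=t(v)$; $[\![\neg\theta]\!]_M=W\setminus[\![\theta]\!]_M$; $[\![\theta\wedge\psi]\!]_M=[\![\theta]\!]_M\cap[\![\psi]\!]_M$; $[\![\theta\succeq\psi]\!]_M=\emptyset$ if either $[\![\theta]\!]_M$ or $[\![\psi]\!]_M$ is empty, otherwise $\{w: u(\sigma(w,[\![\theta]\!]_M))\ge u(\sigma(w,[\![\psi]\!]_M))\}$. A $\Delta$ model is a model with $W=\mathcal{P}(\mathrm{PROPS})$, $t(v)=\{w: v\in w\}$ for all $v$, and $\sigma$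 $\Delta$-based: for all $w_0$ and nonempty $A$ there is no $w_1\in A$ with $w_0\triangle w_1\subsetneq w_0\triangle\sigma(w_0,A)$ ($\triangle$ = symmetric difference); $u$ is arbitrary. A weighting function is a map $\pi:\mathrm{PROPS}\to(0,\infty)$. For worlds $w_0,w_1$, $d_\pi(w_0,w_1):=\sum_{v\in w_0\triangle w_1}\pi(v)$. A selection function $\sigma$ (on $W=\mathcal{P}(\mathrm{PROPS})$) is $\pi$-based if for every $w\in W$ and nonempty $A\subseteq W$ there is no $w'\in A$ with $d_\pi(w,w')<d_\pi(w,\sigma(w,A))$. *)

(* Defs.v *)
From mathcomp Require Import all_boot all_order all_algebra.
From mathcomp Require Import reals.
Set Implicit Arguments. Unset Strict Implicit. Unset Printing Implicit Defensive.
Import Order.TTheory GRing.Theory Num.Theory.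
Local Open Scope ring_scope.

Section Logic.
Variable PROPS : finType.

Inductive form : Type :=
| Var : PROPS -> form
| Neg : form -> form
| And : form -> form -> form
| Pref : form -> form -> form.

Definition Or (a b : form) := Neg (And (Neg a) (Neg b)).
Definition Imp (a b : form) := Or (Neg a) b.
Definition Iff (a b : form) := And (Imp a b) (Imp b a).
Definition Strict (a b : form) := And (Pref a b) (Neg (Pref b a)).
Definition Top (v0 : PROPS) := Imp (Var v0) (Var v0).
Definition Cond (v0 : PROPS) (a b : form) :=
  Strict (And a b) (And a (Neg b)).
Definition Obl (v0 : PROPS) (b : form) := Cond v0 (Top v0) b.
Definition Perm (v0 : PROPS) (b : form) := Neg (Obl v0 (Neg b)).

Definition world := {set PROPS}.
Definition selfun := world -> {set world} -> world.

Definition is_selection (sigma : selfun) : Prop :=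
  forall (w : world) (A : {set world}), A != set0 -> sigma w A \in A.

Definition symdiff (a b : world) : world := (a :\: b) :|: (b :\: a).

Definition delta_based (sigma : selfun) : Prop :=
  forall (w0 : world) (A : {set world}), A != set0 ->
    ~ (exists2 w1, w1 \in A & symdiff w0 w1 \proper symdiff w0 (sigma w0 A)).

Variable R : realType.

Definition weighting (pi : PROPS -> R) : Prop := forall v, 0 < pi v.

Definition dist (pi : PROPS -> R) (w0 w1 : world) : R :=
  \sum_(v in symdiff w0 w1) pi v.

Definition pi_based (pi : PROPS -> R) (sigma : selfun) : Prop :=
  forall (w : world) (A : {set world}), A != set0 ->
    ~ (exists2 w', w' \in A & dist pi w w' < dist pi w (sigma w A)).

(* Semantics in the Delta model (W, sigma, u, t) with t v = {w | v \in w}. *)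
Fixpoint eval (sigma : selfun) (u : world -> R) (f : form) : {set world} :=
  match f with
  | Var v => [set w : world | v \in w]
  | Neg a => ~: eval sigma u a
  | And a b => eval sigma u a :&: eval sigma u b
  | Pref a b =>
      let A := eval sigma u a in
      let B := eval sigma u b in
      if (A == set0) || (B == set0) then set0
      else [set w : world | u (sigma w B) <= u (sigma w A)]
  end.

Definition fails_implication (pi : PROPS -> R) (phi psi : form) : Prop :=
  exists sigma : selfun,
    [/\ is_selection sigma, delta_based sigma & pi_based pi sigma] /\
    exists (u : world -> R) (w : world),
      w \in eval sigma u phi /\ w \notin eval sigma u psi.

Definition fails_validity (pi : PROPS -> R) (psi : form) : Prop :=
  exists sigma : selfun,
    [/\ is_selection sigma, delta_based sigma & pi_based pi sigma] /\
    exists (u : world -> R) (w : world), w \notin eval sigma u psi.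

End Logic.

(* Main.v *)
Require Import Defs.
From mathcomp Require Import all_boot all_order all_algebra.
From mathcomp Require Import reals.
From mathcomp Require Import lra.
Set Implicit Arguments. Unset Strict Implicit. Unset Printing Implicit Defensive.
Import Order.TTheory GRing.Theory Num.Theory.
Local Open Scope ring_scope.

Section H.
Variables (R : realType) (PROPS : finType) (pi : PROPS -> R).
Hypothesis hpi : weighting pi.

Definition sel : selfun PROPS := fun w A =>
  if [pick x in A] is Some x0 then Order.arg_min x0 (fun x => x \in A) (dist pi w) else w.

Lemma selP (w : world PROPS) A : A != set0 -> sel w A \in A /\ forall y, y \in A -> dist pi w (sel w A) <= dist pi w y.
Proof.
rewrite /sel; case: pickP => [x0 Hx0 _ | H]; last first.
  by case/set0Pn => x; rewrite H.
by case: arg_minP => // i Pi Hm; split.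
Qed.

Lemma dist_lt (w x y : world PROPS) : symdiff w x \proper symdiff w y -> dist pi w x < dist pi w y.
Proof.
move=> Hp; rewrite /dist.
have Hs : symdiff w x \subset symdiff w y by apply: proper_sub.
rewrite [X in _ < X](big_setID (symdiff w x)) /=.
have -> : symdiff w y :&: symdiff w x = symdiff w x by apply/setIidPr.
rewrite ltrDl.
case/properP: Hp => _ [v Hv1 Hv2].
rewrite (bigD1 v) /=; last by rewrite inE Hv2 Hv1.
apply: ltr_pwDl; first exact: hpi.
by apply: sumr_ge0 => i _; apply: ltW; apply: hpi.
Qed.

Lemma symdiff_inj (w x y : world PROPS) : symdiff w x = symdiff w y -> x = y.
Proof.
move=> H; apply/setP => v.
have := congr1 (fun S : {set PROPS} => v \in S) H; rewrite /= !inE.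
by case: (v \in w); case: (v \in x); case: (v \in y).
Qed.

Lemma sel_ok : [/\ is_selection sel, delta_based sel & pi_based pi sel].
Proof.
split.
- by move=> w A HA; case: (selP w HA).
- move=> w A HA [w1 Hw1 Hp]; case: (selP w HA) => _ Hm.
  by have := Hm _ Hw1; rewrite leNgt (dist_lt Hp).
- move=> w A HA [w1 Hw1 Hp]; case: (selP w HA) => _ Hm.
  by have := Hm _ Hw1; rewrite leNgt Hp.
Qed.

Lemma sel_char (w : world PROPS) (A : {set world PROPS}) x : x \in A ->
  (forall y, y \in A -> forall v, (v \in w) != (v \in x) -> (v \in w) != (v \in y)) ->
  sel w A = x.
Proof.
move=> Hx Hc.
have HA : A != set0 by apply/set0Pn; exists x.
case: (selP w HA) => Hs Hm.
apply/eqP; apply/negPn/negP => Hne.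
have Hsub : symdiff w x \subset symdiff w (sel w A).
  apply/subsetP => v; rewrite !inE => Hv; have := Hc _ Hs v.
  by move: Hv; case: (v \in w); case: (v \in x); case: (v \in sel w A) => //= _; apply.
have Hp : symdiff w x \proper symdiff w (sel w A).
  rewrite properEneq Hsub andbT; apply/negP => /eqP /symdiff_inj E.
  by move: Hne; rewrite E eqxx.
by have := Hm _ Hx; rewrite leNgt (dist_lt Hp).
Qed.

Definition litw (w : world PROPS) (P N : seq PROPS) : world PROPS :=
  [set v | (v \in P) || ((v \in w) && (v \notin N))].

Lemma sel_lit (w : world PROPS) (A : {set world PROPS}) (P N : seq PROPS) :
  (forall y, (y \in A) = all (fun v => v \in y) P && all (fun v => v \notin y) N) ->
  all (fun v => v \notin N) P ->
  sel w A = litw w P N.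
Proof.
move=> HA Hd; apply: sel_char.
  rewrite HA; apply/andP; split; apply/allP => v Hv; rewrite inE.
    by rewrite Hv.
  apply/negP => /orP [HvP|/andP [_ HvN]]; last by rewrite Hv in HvN.
  by move/allP: Hd => /(_ v HvP); rewrite Hv.
move=> y; rewrite HA => /andP [/allP HP /allP HN] v; rewrite inE.
case HvP: (v \in P) => /=.
  by rewrite (HP v HvP); case: (v \in w).
case HvN: (v \in N) => /=; last by rewrite andbT eqxx.
by rewrite andbF (negbTE (HN v HvN)).
Qed.

Lemma litw_in (w : world PROPS) (A : {set world PROPS}) (P N : seq PROPS) :
  (forall y, (y \in A) = all (fun v => v \in y) P && all (fun v => v \notin y) N) ->
  all (fun v => v \notin N) P -> litw w P N \in A.
Proof.
move=> HA Hd; rewrite HA; apply/andP; split; apply/allP => v Hv; rewrite inE.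
  by rewrite Hv.
apply/negP => /orP [HvP|/andP [_ HvN]]; last by rewrite Hv in HvN.
by move/allP: Hd => /(_ v HvP); rewrite Hv.
Qed.

Lemma lit_ne (A : {set world PROPS}) (P N : seq PROPS) :
  (forall y, (y \in A) = all (fun v => v \in y) P && all (fun v => v \notin y) N) ->
  all (fun v => v \notin N) P -> A != set0.
Proof. by move=> HA Hd; apply/set0Pn; exists (litw set0 P N); apply: litw_in. Qed.

Lemma sel_self (w : world PROPS) (A : {set world PROPS}) : w \in A -> sel w A = w.
Proof. by move=> Hw; apply: sel_char => // y _ v; rewrite eqxx. Qed.

Section Ev.
Variables (sg : selfun PROPS) (u : world PROPS -> R) (v0 : PROPS).

Lemma in_strict a b w : (w \in eval sg u (Strict a b)) =
  [&& eval sg u a != set0, eval sg u b != set0 &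
      u (sg w (eval sg u b)) < u (sg w (eval sg u a))].
Proof.
rewrite /Strict /= !inE.
case: (eval sg u a == set0); case: (eval sg u b == set0) => /=; rewrite ?inE //.
by rewrite -ltNge andb_idl // => /ltW.
Qed.

Lemma eval_top : eval sg u (Top v0) = setT.
Proof. by apply/setP => w; rewrite /= !inE; case: (v0 \in w). Qed.

Lemma in_obl b w : (w \in eval sg u (Obl v0 b)) =
  [&& eval sg u b != set0, eval sg u (Neg b) != set0 &
      u (sg w (eval sg u (Neg b))) < u (sg w (eval sg u b))].
Proof.
rewrite /Obl /Cond in_strict.
have E1 : eval sg u (And (Top v0) b) = eval sg u b by change (eval sg u (Top v0) :&: eval sg u b = eval sg u b); rewrite eval_top setTI.
have E2 : eval sg u (And (Top v0) (Neg b)) = eval sg u (Neg b) by change (eval sg u (Top v0) :&: eval sg u (Neg b) = eval sg u (Neg b)); rewrite eval_top setTI.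
by rewrite E1 E2.
Qed.

Lemma in_perm b w : (w \in eval sg u (Perm v0 b)) =
  ~~ [&& eval sg u (Neg b) != set0, eval sg u b != set0 &
      u (sg w (eval sg u b)) < u (sg w (eval sg u (Neg b)))].
Proof.
rewrite [LHS](_ : _ = (w \in ~: eval sg u (Obl v0 (Neg b)))) //; rewrite inE in_obl.
have -> : eval sg u (Neg (Neg b)) = eval sg u b by rewrite /= setCK.
by [].
Qed.
End Ev.

End H.
Lemma in_litw (PROPS : finType) (w : world PROPS) P N v :
  (v \in litw w P N) = (v \in P) || (v \in w) && (v \notin N).
Proof. by rewrite inE. Qed.

Section M.
Variables (R : realType) (PROPS : finType) (pi : PROPS -> R) (v0 p q : PROPS).
Hypothesis hpi : weighting pi.
Hypothesis npq : p <> q.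

Lemma nqp : (q == p) = false. Proof. by apply/eqP => H; apply: npq. Qed.
Lemma npq' : (p == q) = false. Proof. by apply/eqP. Qed.

Section U.
Variable u : world PROPS -> R.

Lemma in_and a b w : (w \in eval (sel pi) u (And a b)) = (w \in eval (sel pi) u a) && (w \in eval (sel pi) u b).
Proof. by rewrite [LHS]inE. Qed.
Lemma in_neg a w : (w \in eval (sel pi) u (Neg a)) = ~~ (w \in eval (sel pi) u a).
Proof. by rewrite [LHS]inE. Qed.
Lemma in_or a b w : (w \in eval (sel pi) u (Or a b)) = (w \in eval (sel pi) u a) || (w \in eval (sel pi) u b).
Proof. by rewrite /Or in_neg in_and !in_neg negb_and !negbK. Qed.
Lemma in_imp a b w : (w \in eval (sel pi) u (Imp a b)) = ~~ (w \in eval (sel pi) u a) || (w \in eval (sel pi) u b).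
Proof. by rewrite /Imp in_or in_neg. Qed.
Lemma in_var a w : (w \in eval (sel pi) u (Var a)) = (a \in w).
Proof. by rewrite [LHS]inE. Qed.

Lemma memNE (A : {set world PROPS}) x : x \in A -> (A != set0) = true.
Proof. by move=> H; apply/set0Pn; exists x. Qed.

Ltac litt := (try move=> y); rewrite ?in_var ?in_neg ?in_and ?in_or /= ?negb_or ?negbK ?andbT ?inE //.

Lemma selL1 w a : (sel pi) w (eval (sel pi) u (Var a)) = litw w [:: a] [::].
Proof. by apply: (sel_lit hpi); litt. Qed.
Lemma neL1 a : (eval (sel pi) u (Var a) != set0) = true.
Proof. by apply/idP; apply: (lit_ne (P:=[:: a]) (N:=[::])); litt. Qed.
Lemma selL2 w a : (sel pi) w (eval (sel pi) u (Neg (Var a))) = litw w [::] [:: a].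
Proof. by apply: (sel_lit hpi); litt. Qed.
Lemma neL2 a : (eval (sel pi) u (Neg (Var a)) != set0) = true.
Proof. by apply/idP; apply: (lit_ne (P:=[::]) (N:=[:: a])); litt. Qed.
Lemma selL3 w a b : (sel pi) w (eval (sel pi) u (And (Var a) (Var b))) = litw w [:: a; b] [::].
Proof. by apply: (sel_lit hpi); litt. Qed.
Lemma neL3 a b : (eval (sel pi) u (And (Var a) (Var b)) != set0) = true.
Proof. by apply/idP; apply: (lit_ne (P:=[:: a; b]) (N:=[::])); litt. Qed.
Lemma selL4 w a b : a != b -> (sel pi) w (eval (sel pi) u (And (Var a) (Neg (Var b)))) = litw w [:: a] [:: b].
Proof. by move=> H; apply: (sel_lit hpi); litt. Qed.
Lemma neL4 a b : a != b -> (eval (sel pi) u (And (Var a) (Neg (Var b))) != set0) = true.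
Proof. by move=> H; apply/idP; apply: (lit_ne (P:=[:: a]) (N:=[:: b])); litt. Qed.
Lemma selL5 w a b : (sel pi) w (eval (sel pi) u (Neg (Or (Var a) (Var b)))) = litw w [::] [:: a; b].
Proof. by apply: (sel_lit hpi); litt. Qed.
Lemma neL5 a b : (eval (sel pi) u (Neg (Or (Var a) (Var b))) != set0) = true.
Proof. by apply/idP; apply: (lit_ne (P:=[::]) (N:=[:: a; b])); litt. Qed.
End U.
Opaque eval sel.

Ltac ev := repeat (first [erewrite in_and | erewrite in_or | erewrite in_imp | erewrite in_neg
   | erewrite in_var | erewrite in_perm | erewrite in_obl | erewrite in_strict
   | erewrite selL1 | erewrite selL2 | erewrite selL3 | erewrite selL5
   | erewrite neL1 | erewrite neL2 | erewrite neL3 | erewrite neL5]).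
Ltac fin Hu := repeat erewrite Hu; repeat erewrite in_litw; rewrite ?inE ?eqxx ?nqp ?npq' /=.

Lemma ia : fails_implication pi (And (Perm v0 (Var p)) (Perm v0 (Var q))) (Perm v0 (And (Var p) (Var q))).
Proof.
exists (sel pi); split; first exact: sel_ok.
pose u : world PROPS -> R := fun x => if (p \in x) && (q \in x) then -1 else 0.
have Hu : forall x, u x = if (p \in x) && (q \in x) then -1 else 0 by [].
clearbody u.
exists u, set0.
have E : sel pi set0 (eval (sel pi) u (Neg (And (Var p) (Var q)))) = set0.
  by apply: (sel_self hpi); ev; rewrite in_set0.
split; ev; rewrite ?E.
  by fin Hu; rewrite ltxx.
rewrite in_perm. ev. rewrite E (@memNE _ set0); last by ev; rewrite in_set0.
fin Hu. rewrite negbK. lra.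
Qed.

Ltac cl := rewrite ?negbK -?leNgt; lra.

Lemma npqb : p != q. Proof. by apply/eqP. Qed.
Lemma nqpb : q != p. Proof. by apply/eqP => H; apply: npq. Qed.

Lemma ib : fails_implication pi (Obl v0 (Or (Var p) (Var q))) (Or (Obl v0 (Var p)) (Obl v0 (Var q))).
Proof.
exists (sel pi); split; first exact: sel_ok.
pose u : world PROPS -> R := fun x => if (p \in x) || (q \in x) then 1 else 0.
have Hu : forall x, u x = if (p \in x) || (q \in x) then 1 else 0 by [].
clearbody u.
exists u, [set p; q].
have M : [set p; q] \in eval (sel pi) u (Or (Var p) (Var q)) by rewrite in_or; ev; rewrite !inE eqxx.
have E : sel pi [set p; q] (eval (sel pi) u (Or (Var p) (Var q))) = [set p; q] by apply: (sel_self hpi).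
split.
  by rewrite in_obl; ev; rewrite E (memNE M); fin Hu; lra.
rewrite in_or; ev; fin Hu; rewrite ?orbT /=; lra.
Qed.

Lemma ic : fails_implication pi (Imp (Var p) (Var q)) (Imp (Obl v0 (Var p)) (Obl v0 (Var q))).
Proof.
exists (sel pi); split; first exact: sel_ok.
pose u : world PROPS -> R := fun x => if (p \in x) then 1 else 0.
have Hu : forall x, u x = if (p \in x) then 1 else 0 by [].
clearbody u.
exists u, set0.
split.
  by rewrite in_imp; ev; rewrite in_set0.
rewrite in_imp; ev; fin Hu; lra.
Qed.

Lemma id_ : fails_implication pi (Obl v0 (Var p)) (Obl v0 (And (Var p) (Var q))).
Proof.
exists (sel pi); split; first exact: sel_ok.
pose u : world PROPS -> R := fun x => (if (p \in x) then 1 else 0) - (if q \in x then 2 else 0).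
have Hu : forall x, u x = (if (p \in x) then 1 else 0) - (if q \in x then 2 else 0) by [].
clearbody u.
exists u, set0.
have M : set0 \in eval (sel pi) u (Neg (And (Var p) (Var q))) by ev; rewrite in_set0.
have E : sel pi set0 (eval (sel pi) u (Neg (And (Var p) (Var q)))) = set0 by apply: (sel_self hpi).
split.
  by rewrite in_obl; ev; fin Hu; lra.
rewrite in_obl; ev; rewrite E (memNE M); fin Hu; lra.
Qed.

Lemma ie : fails_implication pi (Perm v0 (Var p)) (Perm v0 (And (Var p) (Var q))).
Proof.
exists (sel pi); split; first exact: sel_ok.
pose u : world PROPS -> R := fun x => if (p \in x) && (q \in x) then -1 else 0.
have Hu : forall x, u x = if (p \in x) && (q \in x) then -1 else 0 by [].
clearbody u.
exists u, set0.
have E : sel pi set0 (eval (sel pi) u (Neg (And (Var p) (Var q)))) = set0.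
  by apply: (sel_self hpi); ev; rewrite in_set0.
split.
  by rewrite in_perm; ev; fin Hu; rewrite ltxx.
rewrite in_perm. ev. rewrite E (@memNE _ set0); last by ev; rewrite in_set0.
fin Hu. rewrite negbK. lra.
Qed.

Lemma if_ : fails_validity pi (Or (Cond v0 (Var p) (Var q)) (Cond v0 (Var q) (Var p))).
Proof.
exists (sel pi); split; first exact: sel_ok.
exists (fun _ => 0), set0.
rewrite in_or /Cond; ev.
by rewrite ltxx !andbF.
Qed.

Lemma ig : fails_implication pi (Obl v0 (Or (Var p) (Var q))) (Obl v0 (Var p)).
Proof.
exists (sel pi); split; first exact: sel_ok.
pose u : world PROPS -> R := fun x => (if (q \in x) then 1 else 0) - (if p \in x then 1 else 0).
have Hu : forall x, u x = (if (q \in x) then 1 else 0) - (if p \in x then 1 else 0) by [].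
clearbody u.
exists u, [set q].
have M : [set q] \in eval (sel pi) u (Or (Var p) (Var q)) by rewrite in_or; ev; rewrite !inE eqxx orbT.
have E : sel pi [set q] (eval (sel pi) u (Or (Var p) (Var q))) = [set q] by apply: (sel_self hpi).
split.
  by rewrite in_obl; ev; rewrite E (memNE M); fin Hu; cl.
rewrite in_obl; ev; fin Hu; cl.
Qed.

Lemma ih : fails_implication pi (Obl v0 (Var p)) (Var p).
Proof.
exists (sel pi); split; first exact: sel_ok.
pose u : world PROPS -> R := fun x => if (p \in x) then 1 else 0.
have Hu : forall x, u x = if (p \in x) then 1 else 0 by [].
clearbody u.
exists u, set0.
split.
  by rewrite in_obl; ev; fin Hu; lra.
by rewrite in_var in_set0.
Qed.

Lemma ij : fails_implication pi (And (Strict (Neg (Var q)) (Neg (Var p))) (Obl v0 (Var p))) (Obl v0 (Var q)).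
Proof.
exists (sel pi); split; first exact: sel_ok.
pose u : world PROPS -> R := fun x => if (p \in x) then 1 else 0.
have Hu : forall x, u x = if (p \in x) then 1 else 0 by [].
clearbody u.
exists u, [set p; q].
split.
  by rewrite in_and; ev; fin Hu; lra.
rewrite in_obl; ev; fin Hu; lra.
Qed.

Lemma ii : fails_implication pi (Perm v0 (Var p)) (Perm v0 (Obl v0 (Var p))).
Proof.
exists (sel pi); split; first exact: sel_ok.
pose u : world PROPS -> R := fun x => if (q \in x) && (p \notin x) then -1 else 0.
have Hu : forall x, u x = if (q \in x) && (p \notin x) then -1 else 0 by [].
clearbody u.
exists u, set0.
have HO : forall y, (y \in eval (sel pi) u (Obl v0 (Var p))) = (q \in y).
  move=> y; rewrite in_obl; ev; fin Hu.
  by case: (q \in y) => /=; rewrite ?andbF /= ?ltrN10 ?ltxx.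
have HN : forall y, (y \in eval (sel pi) u (Neg (Obl v0 (Var p)))) = (q \notin y).
  by move=> y; rewrite in_neg HO.
have E1 : sel pi set0 (eval (sel pi) u (Obl v0 (Var p))) = litw set0 [:: q] [::].
  by apply: (sel_lit hpi); (try move=> y); rewrite ?HO /= ?andbT ?inE.
have E2 : sel pi set0 (eval (sel pi) u (Neg (Obl v0 (Var p)))) = litw set0 [::] [:: q].
  by apply: (sel_lit hpi); (try move=> y); rewrite ?HN /= ?andbT ?inE.
have N1 : (eval (sel pi) u (Obl v0 (Var p)) != set0) = true.
  by apply/idP; apply: (lit_ne (P:=[:: q]) (N:=[::])); (try move=> y); rewrite ?HO /= ?andbT ?inE.
have N2 : (eval (sel pi) u (Neg (Obl v0 (Var p))) != set0) = true.
  by apply/idP; apply: (lit_ne (P:=[::]) (N:=[:: q])); (try move=> y); rewrite ?HN /= ?andbT ?inE.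
split.
  by rewrite in_perm; ev; fin Hu; rewrite ltxx.
rewrite in_perm E1 E2 N1 N2; fin Hu; lra.
Qed.
End M.

Theorem proposition5p6 (R : realType) (PROPS : finType) (v0 p q : PROPS)
  (pi : PROPS -> R) :
  p <> q -> weighting pi ->
  let O := Obl v0 in let P := Perm v0 in let C := Cond v0 in
  let fi := fails_implication pi in
     fi (And (P (Var p)) (P (Var q))) (P (And (Var p) (Var q))) /\
      fi (O (Or (Var p) (Var q))) (Or (O (Var p)) (O (Var q))) /\
      fi (Imp (Var p) (Var q)) (Imp (O (Var p)) (O (Var q))) /\
      fi (O (Var p)) (O (And (Var p) (Var q))) /\
      fi (P (Var p)) (P (And (Var p) (Var q))) /\
      fails_validity pi (Or (C (Var p) (Var q)) (C (Var q) (Var p))) /\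
      fi (O (Or (Var p) (Var q))) (O (Var p)) /\
      fi (O (Var p)) (Var p) /\
      fi (P (Var p)) (P (O (Var p))) /\
      fi (And (Strict (Neg (Var q)) (Neg (Var p))) (O (Var p))) (O (Var q)).

Proof.
move=> npq hpi; cbv zeta.
split; first by eapply ia; eauto.
split; first by eapply ib; eauto.
split; first by eapply ic; eauto.
split; first by eapply id_; eauto.
split; first by eapply ie; eauto.
split; first by eapply if_; eauto.
split; first by eapply ig; eauto.
split; first by eapply ih; eauto.
split; first by eapply ii; eauto.
by eapply ij; eauto.
Qed.
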